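(* Let $G$ be a finite abelian group and let $\rho\ge 2$ be an integer. Then $$s_\rho(G)=\max\{|H|\cdot t_\rho(G/H): H \text{ a proper subgroup of } G\}.$$
   Context: Groups are written additively. For $A\subseteq G$ let $A_0:=A\cup\{0\}$ and $\langle A\rangle^+_\rho:=\rho A_0=\{a_1+\dots+a_\rho:a_i\in A_0\}$. $\operatorname{diam}^+_A(G):=\min\{\rho\in\mathbb{N}_0:\langle A\rangle^+_\rho=G\}$ ($\min\varnothing=\infty$); $\operatorname{diam}^+(G):=\max\{\operatorname{diam}^+_A(G):\langle A\rangle=G\}$. The period of $S\subseteq G$ is $\pi(S):=\{g\in G:S+g=S\}$; $S$ is aperiodic if $\pi(S)=\{0\}$ and periodic otherwise. A subset $A\subseteq G$ is $\rho$-maximal if it is maximal under inclusion subject to $\operatorname{diam}^+_A(G)\ge\rho$, i.e. subject to $\langle A\rangle^+_{\rho-1}\neq G$. With the convention $\max\varnothing=0$: $s_\rho(G):=\max\{|A|: A\subseteq G,\ \rho\le\operatorname{diam}^+_A(G)<\infty\}$ and $t_\rho(G):=\max\{|A|: A \text{ is an aperiodic } \rho\text{-maximal generating set for } G\}$. *)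

(* Defs.v *)
(* finite groups (abelian groups written multiplicatively). *)
From Stdlib Require Import ClassicalEpsilon.
From mathcomp Require Import all_boot all_fingroup.
Set Implicit Arguments. Unset Strict Implicit. Unset Printing Implicit Defensive.
Local Open Scope group_scope.

Definition classb (P : Prop) : bool :=
  if excluded_middle_informative P then true else false.

Section Defs.
Variable gT : finGroupType.
Implicit Types (G A B S : {set gT}).

(* A_0 := A ∪ {0} (here 0 is the unit 1 of the group) *)
Definition A0 A : {set gT} := 1 |: A.

(* <A>^+_k := k A_0, with 0 A_0 = {0} *)
Definition sumset (k : nat) A : {set gT} := iter k (fun S => S * A0 A) [set 1].

(* rho <= diam^+_A(G)  (min over the empty set is infinity) *)
Definition diam_geq G A (rho : nat) : Prop :=
  forall k, sumset k A = G -> rho <= k.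

Definition diam_finite G A : Prop := exists k, sumset k A = G.

Definition period G S : {set gT} := [set g in G | S :* g == S].

Definition aperiodic G S : Prop := period G S = [set 1].

Definition rho_maximal G A (rho : nat) : Prop :=
  [/\ A \subset G, diam_geq G A rho &
      forall B, A \proper B -> B \subset G -> ~ diam_geq G B rho].

Definition s_rho G (rho : nat) : nat :=
  \max_(A : {set gT} | (A \subset G) && classb (diam_geq G A rho /\ diam_finite G A)) #|A|.

Definition t_rho G (rho : nat) : nat :=
  \max_(A : {set gT} | (A \subset G) &&
          classb [/\ rho_maximal G A rho, <<A>> = G & aperiodic G A]) #|A|.
End Defs.

(* Main.v *)
Require Import Defs.
From mathcomp Require Import all_boot all_fingroup.
From Stdlib Require Import Classical ClassicalEpsilon.
Set Implicit Arguments. Unset Strict Implicit. Unset Printing Implicit Defensive.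
Local Open Scope group_scope.

Lemma classbE (P : Prop) : classb P = true <-> P.
Proof. by rewrite /classb; case: excluded_middle_informative. Qed.

Lemma max_mul_le (I : finType) (P : pred I) (F : I -> nat) c m :
  (forall i, P i -> (c * F i <= m)%N) -> (c * \max_(i | P i) F i <= m)%N.
Proof.
move=> H; elim/big_ind: _ => //; first by rewrite muln0.
by move=> x y Hx Hy; case: (leqP x y).
Qed.

Section Gen.
Variable gT : finGroupType.
Implicit Types (A B S X : {set gT}) (G : {group gT}).

Lemma sumsetS0 k A : sumset k.+1 A = sumset k A * A0 A.
Proof. by []. Qed.

Lemma one_sumset k A : 1 \in sumset k A.
Proof.
elim: k => [|k IH]; first by rewrite /sumset /= set11.
rewrite sumsetS0; apply/mulsgP; exists 1 1; rewrite ?mulg1 //.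
by rewrite /A0 setU11.
Qed.

Lemma sumset_mono k A : sumset k A \subset sumset k.+1 A.
Proof.
rewrite sumsetS0; apply/subsetP => x Hx; apply/mulsgP; exists x 1; rewrite ?mulg1 //.
by rewrite /A0 setU11.
Qed.

Lemma sumset_monoA k A B : A \subset B -> sumset k A \subset sumset k B.
Proof.
move=> AB; elim: k => [|k IH] //; rewrite !sumsetS0 mulgSS //.
by rewrite /A0 setUS.
Qed.

Lemma sumset_sub k A G : A \subset G -> sumset k A \subset G.
Proof.
move=> AG; elim: k => [|k IH]; first by rewrite /sumset /= sub1set group1.
rewrite sumsetS0 -(mulGid G) mulgSS // /A0 subUset sub1set group1 //.
Qed.

Lemma period_group G S : group_set (period G S).
Proof.
apply/group_setP; split.
  by rewrite inE group1 rcoset1 eqxx.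
move=> x y; rewrite !inE => /andP[Gx /eqP Sx] /andP[Gy /eqP Sy].
by rewrite groupM // rcosetM Sx Sy eqxx.
Qed.

Lemma A0_idem A : A0 (A0 A) = A0 A.
Proof. by rewrite /A0 setUA setUid. Qed.

Lemma sumset_A0 k A : sumset k (A0 A) = sumset k A.
Proof. by rewrite /sumset A0_idem. Qed.

Lemma sumset_gen k A : sumset k A \subset <<A>>.
Proof. exact: (sumset_sub k (subset_gen A)). Qed.

Lemma sumset_card j A :
  (forall i, ~~ (sumset i.+1 A \subset sumset i A)) -> j <= #|sumset j A|.
Proof.
move=> Hn; elim: j => [|j IH] //.
apply: leq_trans (proper_card _); first exact: IH.
by rewrite properE sumset_mono Hn.
Qed.

Lemma sumset_stab A : exists k, sumset k A = <<A>>.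
Proof.
have [j Hj]: exists j, sumset j.+1 A \subset sumset j A.
  apply: NNPP => Hne.
  have Hn : forall i, ~~ (sumset i.+1 A \subset sumset i A).
    by move=> i; apply/negP => Hi; apply: Hne; exists i.
  have := sumset_card #|gT|.+1 Hn.
  by rewrite ltnNge max_card.
exists j; set S := sumset j A.
pose K := Group (period_group [set: gT]%G S).
have AK : A \subset K.
  apply/subsetP => a Aa; rewrite !inE /=.
  rewrite eqEcard card_rcoset leqnn andbT.
  by apply: subset_trans Hj; rewrite sumsetS0 mulgS // sub1set /A0 inE Aa orbT.
suff: S == <<A>> by move/eqP.
rewrite eqEsubset sumset_gen /=.
apply/subsetP => g Hg.
have : g \in K.
  have gK : <<A>> \subset K by rewrite gen_subG AK.
  exact: (subsetP gK _ Hg).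
rewrite inE inE /= => /eqP <-.
by have := mem_mulg (one_sumset j A) (set11 g); rewrite mul1g.
Qed.

Lemma sumset_stabS k A : sumset k A = <<A>> -> sumset k.+1 A = <<A>>.
Proof.
move=> Hk; suff: sumset k.+1 A == <<A>> by move/eqP.
rewrite eqEsubset sumset_gen -{1}Hk sumset_mono //.
Qed.
Lemma A0_id A : 1 \in A -> A0 A = A.
Proof. by move=> A1; apply/setUidPr; rewrite sub1set. Qed.

Lemma maximal_has1 G A rho : rho_maximal G A rho -> 1 \in A.
Proof.
case=> AG dA mx; apply/negPn/negP => n1; apply: (mx (A0 A)).
- rewrite properE /A0 subsetUr /=; apply/negP => /subsetP/(_ 1).
  by rewrite setU11 => /(_ isT); apply/negP.
- by rewrite /A0 subUset sub1set group1 AG.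
- by move=> k; rewrite sumset_A0; exact: dA.
Qed.

Lemma gen_of_finite G A k : A \subset G -> sumset k A = G -> <<A>> = G.
Proof.
move=> AG Hk; suff: <<A>> == G by move/eqP.
by rewrite eqEsubset gen_subG AG -{1}Hk sumset_gen.
Qed.
End Gen.

Section Quo.
Variables (gT : finGroupType) (H : {group gT}).

Lemma sumset_quo k (X : {set gT}) :
  X \subset 'N(H) -> sumset k X / H = sumset k (X / H).
Proof.
move=> XN; elim: k => [|k IH].
  by rewrite /sumset /= quotient_set1 ?group1 // morph1.
rewrite !sumsetS0 quotientMr; last by rewrite /A0 subUset sub1set group1 XN.
by rewrite IH /A0 quotientU quotient_set1 ?group1 // morph1.
Qed.

Lemma sumset_pre k (C : {set coset_of H}) :
  1 \in C -> sumset k.+1 (coset H @*^-1 C) = coset H @*^-1 (sumset k.+1 C).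
Proof.
move=> C1.
have P1 : (1 : gT) \in coset H @*^-1 C by rewrite mem_morphpre ?group1 ?morph1.
elim: k => [|k IH].
  by rewrite /sumset /= !mul1g !A0_id.
by rewrite (sumsetS0 k.+1 (coset H @*^-1 C)) (sumsetS0 k.+1 C) IH !A0_id // [RHS]cosetpreM.
Qed.
Lemma card_pre (B : {set coset_of H}) :
  #|coset H @*^-1 B| = (#|H| * #|B|)%N.
Proof.
elim: {B}_.+1 {-2}B (ltnSn #|B|) => // n IH B ltB.
case: (set_0Vmem B) => [-> | [c Bc]]; first by rewrite morphpre0 !cards0 muln0.
rewrite -{1}(setD1K Bc) morphpreU.
have := cardsUI (coset H @*^-1 [set c]) (coset H @*^-1 (B :\ c)).
rewrite -morphpreI.
have -> : [set c] :&: (B :\ c) = set0.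
  by apply/setP => x; rewrite !inE; case: eqP => // ->; rewrite eqxx.
rewrite morphpre0 cards0 addn0 => ->.
have ltB' : #|B :\ c| < n.
  by move: ltB; rewrite (cardsD1 c B) Bc.
rewrite cosetpre_set1_coset IH // (cardsD1 c B) Bc mulnDr muln1.
congr (_ + _)%N.
by case: (cosetP c) => x Nx ->; rewrite val_coset // card_rcoset.
Qed.
End Quo.

Theorem lemma2p3 (gT : finGroupType) (G : {group gT}) (rho : nat) :
  abelian G -> 2 <= rho ->
  s_rho G rho = \max_(H : {group gT} | H \proper G) (#|H| * t_rho (G / H) rho)%N.
Proof.
move=> abG rho2.
set RHS := \max_(H : {group gT} | H \proper G) _.
apply/eqP; rewrite eqn_leq; apply/andP; split; last first.
  apply/bigmax_leqP => H HG; apply: max_mul_le => B /andP[BG /classbE [Bmax Bgen Bap]].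
  have nHG : G \subset 'N(H) := sub_abelian_norm abG (proper_sub HG).
  have nsHG : H <| G by rewrite -sub_abelian_normal // (proper_sub HG).
  have GK : coset H @*^-1 (G / H) = G := quotientGK nsHG.
  set A := coset H @*^-1 B.
  have cA : #|A| = (#|H| * #|B|)%N.
    exact: card_pre.
  rewrite -cA; apply: leq_bigmax_cond.
  have AG : A \subset G by rewrite -GK /A cosetpreSK.
  have B1 : 1 \in B := maximal_has1 Bmax.
  rewrite AG /=; apply/classbE; split.
    move=> k Hk; case: Bmax => _ dB _; apply: dB.
    rewrite -(cosetpreK B) -sumset_quo ?Hk //.
    exact: subset_trans AG nHG.
  have [k Hk] := sumset_stab B.
  have Hk' := sumset_stabS Hk.
  by exists k.+1; rewrite sumset_pre // Hk' Bgen GK.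
have core : forall A, rho_maximal G A rho -> diam_finite G A -> #|A| <= RHS.
  move=> A Amax fA.
  have A1 := maximal_has1 Amax.
  have AG : A \subset G by case: Amax.
  pose H := Group (period_group G A).
  have HG : H \subset G by apply/subsetP => g; rewrite inE => /andP[].
  have Hper : forall g, g \in H -> A :* g = A by move=> g; rewrite inE => /andP[_ /eqP].
  have HP : H \proper G.
    rewrite properE HG /=; apply/negP => GH.
    have : sumset 1 A = G.
      rewrite /sumset /= mul1g A0_id //.
      suff: A == G by move/eqP.
      rewrite eqEsubset AG /=; apply/subsetP => g Gg.
      rewrite -(Hper g (subsetP GH g Gg)).
      by have := mem_mulg A1 (set11 g); rewrite mul1g.
    by case: Amax => _ dA _ /dA; rewrite leqNgt rho2.
  have nHG : G \subset 'N(H) := sub_abelian_norm abG HG.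
  have nsHG : H <| G by rewrite -sub_abelian_normal.
  have GK : coset H @*^-1 (G / H) = G := quotientGK nsHG.
  have nAH : A \subset 'N(H) := subset_trans AG nHG.
  have AH : A * H = A.
    suff: A * H == A by move/eqP.
    rewrite eqEsubset; apply/andP; split.
      apply/subsetP => x /mulsgP[a h Aa Hh ->].
      by rewrite -(Hper h Hh) mem_mulg ?set11.
    apply/subsetP => a Aa; rewrite -[a]mulg1; exact: mem_mulg.
  have PB : coset H @*^-1 (A / H) = A by rewrite quotientK // -(normC nAH) AH.
  set B := A / H.
  have B1 : 1 \in B by apply/morphimP; exists 1; rewrite ?group1 ?morph1.
  have cA : #|A| = (#|H| * #|B|)%N by rewrite -{1}PB card_pre.
  apply: leq_trans (leq_bigmax_cond H HP); rewrite cA leq_mul2l; apply/orP; right.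
  apply: leq_bigmax_cond; rewrite quotientS //; apply/classbE; split.
  - split; first by rewrite /B quotientS.
    + move=> [|k] Hk.
        exfalso; move: HP; rewrite properE HG andTb -(quotient_sub1 nHG).
        by rewrite -Hk /sumset /= subxx.
      case: Amax => _ dA _; apply: dA.
      by rewrite -PB sumset_pre // Hk GK.
    + move=> B' BB' B'G dB'.
      case: Amax => _ _ mx; apply: (mx (coset H @*^-1 B')).
      * by rewrite -PB cosetpre_proper.
      * by rewrite -GK cosetpreSK.
      * move=> k Hk; apply: dB'.
        rewrite -(cosetpreK B') -sumset_quo ?Hk //.
        by apply: subset_trans nHG; rewrite -GK cosetpreSK.
  - have [k Hk] := fA.
    by rewrite /B -quotient_gen // (gen_of_finite AG Hk).
  - apply/setP => c; rewrite !inE.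
    apply/andP/eqP => [[Gc /eqP Bc] | ->]; last by rewrite group1 rcoset1.
    case/morphimP: Gc Bc => g Ng Gg -> Bc.
    have Ag : A :* g = A.
      have := congr1 (fun X => coset H @*^-1 X) Bc.
      by rewrite cosetpreM PB cosetpre_set1 // mulgA AH.
    apply: coset_id; rewrite inE Gg Ag eqxx //.
have ext : forall n (A : {set gT}), #|G| - #|A| < n -> A \subset G -> diam_geq G A rho ->
    diam_finite G A -> #|A| <= RHS.
  elim=> [|n IH] A // ltn AG dA fA.
  case: (classic (rho_maximal G A rho)) => [Amax | nmax]; first exact: core.
  have [B [AB BG dB]] : exists B : {set gT}, [/\ A \proper B, B \subset G & diam_geq G B rho].
    apply: NNPP => Hne; apply: nmax; split => // B AB BG dB.
    by apply: Hne; exists B.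
  have fB : diam_finite G B.
    case: fA => k Hk; exists k.
    suff: sumset k B == G by move/eqP.
    rewrite eqEsubset sumset_sub //= -{1}Hk.
    exact: sumset_monoA (proper_sub AB).
  have ltAB := proper_card AB.
  apply: leq_trans (ltnW ltAB) _; apply: IH => //.
  have BleG : #|B| <= #|G| := subset_leq_card BG.
  rewrite ltnS in ltn; apply: leq_trans ltn.
  by apply: ltn_sub2l => //; apply: leq_trans BleG.
apply/bigmax_leqP => A /andP[AG /classbE [dA fA]].
exact: (ext (#|G| - #|A|).+1).
Qed.
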